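(* Let $\tilde U=[\tilde u_1,\dots,\tilde u_N]\in\mathbb R^{d\times N}$ be a normalized embedding, i.e. $\tilde K=\tilde U^\top\tilde U$ satisfies $\tilde K_{kk}=1$ for all $k\in[N]$. Let $C>0$ and $\mathcal H_{\tilde U}=\{w\mid w=\tilde U\beta,\ \beta\in\mathbb R^N,\ \|\beta\|_\infty\le C\}$. Then for $p\in(0,1/2]$, $$R(\mathcal H_{\tilde U},\tilde U,p)\le C\sqrt{2p\,\lambda_1(\tilde K)},$$ where $\lambda_1(\tilde K)$ is the largest eigenvalue of $\tilde K$.
   Context: Transductive Rademacher complexity: for a class $\mathcal H$ of vectors $h\in\mathbb R^d$ and $p\in(0,1/2]$, $R(\mathcal H,\tilde U,p)=\frac1N\mathbb E_\gamma\big[\sup_{h\in\mathcal H}\sum_{k=1}^N\gamma_k h^\top\tilde u_k\big]$, where $\gamma_1,\dots,\gamma_N$ are i.i.d. random variables taking values $+1,-1,0$ with probabilities $p,p,1-2p$. In the paper $\tilde U$ is an embedding of node pairs of a graph (columns indexed by pairs), but the statement only uses that the columns have unit norm. *)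

(* Defs.v *)
From mathcomp Require Import all_boot all_order all_algebra.
From mathcomp Require Import classical_sets reals.
Set Implicit Arguments. Unset Strict Implicit. Unset Printing Implicit Defensive.
Import Order.TTheory GRing.Theory Num.Theory.
Local Open Scope ring_scope.
Local Open Scope classical_set_scope.

(* A draw of gamma_k is an element of 'I_3: 0 |-> +1, 1 |-> -1, 2 |-> 0. *)
Definition gam_val (R : ringType) (t : 'I_3) : R :=
  if val t == 0%N then 1 else if val t == 1%N then -1 else 0.

Definition gam_prob (R : ringType) (p : R) (t : 'I_3) : R :=
  if val t == 2%N then 1 - 2%:R * p else p.

(* Transductive Rademacher complexity
   R(H,U,p) = 1/N E_gamma [ sup_{h in H} sum_k gamma_k h^T u_k ],
   the expectation over i.i.d. gamma written as a finite weighted sum. *)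
Definition trans_rademacher (R : realType) (d N : nat)
    (H : set 'cV[R]_d) (U : 'M[R]_(d, N)) (p : R) : R :=
  N%:R^-1 * \sum_(g : {ffun 'I_N -> 'I_3})
     (\prod_(k < N) gam_prob p (g k)) *
     sup [set x : R | exists2 h, H h &
            x = \sum_(k < N) gam_val R (g k) * ((h^T *m col k U) 0 0)].

Definition H_U (R : realType) (d N : nat) (U : 'M[R]_(d, N)) (C : R)
    : set 'cV[R]_d :=
  [set w | exists2 beta : 'cV[R]_N, (forall k, `|beta k 0| <= C) & w = U *m beta].

Definition largest_eigenvalue (R : realType) (n : nat) (K : 'M[R]_n) (lam : R) :=
  eigenvalue K lam /\ forall mu, eigenvalue K mu -> mu <= lam.

(* Main.v *)
From mathcomp Require Import all_boot all_order all_algebra.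
From mathcomp Require Import classical_sets reals complex ring lra.
Require Import Defs.
Import Order.TTheory GRing.Theory Num.Theory.
Local Open Scope ring_scope.

Lemma sup_bound (R : realType) d N (U : 'M[R]_(d, N)) (C : R)
  (g : {ffun 'I_N -> 'I_3}) : 0 <= C ->
  sup [set x : R | exists2 h, H_U U C h &
            x = \sum_(k < N) gam_val R (g k) * ((h^T *m col k U) 0 0)]
  <= C * \sum_j `| \sum_k (U^T *m U) j k * gam_val R (g k) |.
Proof.
move=> HC; apply: ge_sup.
  exists (\sum_(k < N) gam_val R (g k) * (((0 : 'cV[R]_d)^T *m col k U) 0 0)).
  exists 0 => //; exists 0; last by rewrite mulmx0.
  by move=> k; rewrite mxE normr0.
move=> x [h [beta Hb ->] ->].
have E k : ((U *m beta)^T *m col k U) 0 0 = \sum_j beta j 0 * (U^T *m U) j k.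
  rewrite trmx_mul -mulmxA (_ : U^T *m col k U = col k (U^T *m U)); last by rewrite !colE mulmxA.
  by rewrite mxE; apply: eq_bigr => j _; rewrite !mxE.
under eq_bigr do rewrite E.
have -> : \sum_(k < N) gam_val R (g k) * (\sum_j beta j 0 * (U^T *m U) j k)
   = \sum_j beta j 0 * \sum_k (U^T *m U) j k * gam_val R (g k).
  under eq_bigr do rewrite mulr_sumr.
  rewrite exchange_big /=; apply: eq_bigr => j _; rewrite mulr_sumr.
  by apply: eq_bigr => k _; ring.
rewrite mulr_sumr; apply: ler_sum => j _.
by apply: le_trans (ler_norm _) _; rewrite normrM ler_wpM2r.
Qed.
Lemma eig_gram_ge0 (R : realType) d N (U : 'M[R]_(d, N)) a :
  eigenvalue (U^T *m U) a -> 0 <= a.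
Proof.
move=> /eigenvalueP [v Hv vn0].
have E : (v *m (U^T *m U) *m v^T) 0 0 = a * (v *m v^T) 0 0.
  by rewrite Hv -scalemxAl mxE.
have H1 : 0 <= (v *m (U^T *m U) *m v^T) 0 0.
  have -> : v *m (U^T *m U) *m v^T = (v *m U^T) *m (v *m U^T)^T.
    by rewrite trmx_mul trmxK !mulmxA.
  rewrite mxE; apply: sumr_ge0 => i _.
  by rewrite [X in _ * X]mxE -expr2 sqr_ge0.
have H2 : 0 < (v *m v^T) 0 0.
  rewrite mxE lt0r; apply/andP; split; last first.
    by apply: sumr_ge0 => i _; rewrite [X in _ * X]mxE -expr2 sqr_ge0.
  apply: contra vn0 => /eqP S; apply/eqP/rowP => j; rewrite mxE.
  have P0 : forall i : 'I_N, true -> 0 <= v 0 i * v^T i 0.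
    by move=> i _; rewrite [X in _ * X]mxE -expr2 sqr_ge0.
  have /(_ j isT) := psumr_eq0P P0 S.
  by rewrite [X in _ * X]mxE -expr2 => /eqP; rewrite sqrf_eq0 => /eqP.
rewrite E in H1.
by rewrite -(pmulr_lge0 _ H2).
Qed.
Lemma spec_bound (R : realType) N (K : 'M[R]_N) lam :
  K^T = K ->
  (forall a, eigenvalue K a -> 0 <= a) ->
  largest_eigenvalue K lam ->
  \tr (K *m K) <= lam * \tr K.
Proof.
move=> Ksym Kpos [_ Klam].

pose KC := map_mx (real_complex R) K.
have Kherm : KC \is hermsymmx.
  apply/is_hermitianmxP; rewrite expr0 scale1r; apply/matrixP => i j.
  rewrite !mxE conj_Creal; last by apply/complex_realP; exists (K j i).
  by rewrite -[in LHS]Ksym mxE.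
have /orthomx_spectralP hKC := hermitian_normalmx Kherm.
set P := spectralmx KC in hKC; set D := spectral_diag KC in hKC.
have Punit : P \in unitmx by apply: spectral_unit.
have Dreal := hermitian_spectral_diag_real Kherm; rewrite -/D in Dreal.
have Dr i : D 0 i = real_complex R (complex.Re (D 0 i)).
  by rewrite RRe_real //; apply: (mxOverP Dreal).
have eigC i : eigenvalue KC (D 0 i).
  apply/eigenvalueP; exists (row i P).
    rewrite -row_mul hKC !mulmxA mulmxV // mul1mx.
    by apply/rowP => j; rewrite mul_diag_mx !mxE.
  apply: contraNneq (oner_neq0 R[i]) => H.
  have := congr1 (fun M => (M *m invmx P) 0 i) H.
  by rewrite -row_mul mulmxV // row1 mul0mx !mxE !eqxx /= => /eqP.
have eigR i : eigenvalue K (complex.Re (D 0 i)).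
  by have := eigC i; rewrite !eigenvalue_root_char {1}Dr /KC -map_char_poly fmorph_root.
have trK : real_complex R (\tr K) = \sum_i real_complex R (complex.Re (D 0 i)).
  rewrite -trace_map_mx -/KC hKC mxtrace_mulC mulmxA mulmxV // mul1mx mxtrace_diag.
  by apply: eq_bigr => i _; exact: Dr.
have trKK : real_complex R (\tr (K *m K)) = \sum_i real_complex R (complex.Re (D 0 i) ^+ 2).
  rewrite -trace_map_mx map_mxM -/KC hKC -!mulmxA mulKVmx // mxtrace_mulC -!mulmxA.
  rewrite mulmxV // mulmx1 mulmx_diag mxtrace_diag.
  by apply: eq_bigr => i _; rewrite mxE rmorphXn /= -Dr expr2.
have -> : \tr K = \sum_i complex.Re (D 0 i) by apply: complexI; rewrite trK rmorph_sum.
have -> : \tr (K *m K) = \sum_i complex.Re (D 0 i) ^+ 2 by apply: complexI; rewrite trKK rmorph_sum.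
rewrite mulr_sumr; apply: ler_sum => i _.
rewrite expr2 ler_wpM2r //; [exact: Kpos | exact: Klam].
Qed.
Lemma sumw (R : realType) (p : R) : \sum_(t < 3) gam_prob p t = 1.
Proof. rewrite !big_ord_recl big_ord0 /gam_prob /=; ring. Qed.

Lemma E0 (R : realType) N (p : R) :
  \sum_(g : {ffun 'I_N -> 'I_3}) \prod_(i < N) gam_prob p (g i) = 1.
Proof.
rewrite -(bigA_distr_bigA (fun (i : 'I_N) t => gam_prob p t)) /=.
by apply: big1 => i _; apply: sumw.
Qed.

Lemma E2 (R : realType) N (p : R) (k l : 'I_N) :
  \sum_(g : {ffun 'I_N -> 'I_3}) (\prod_(i < N) gam_prob p (g i)) *
     (gam_val R (g k) * gam_val R (g l)) = if k == l then 2%:R * p else 0.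
Proof.
pose F := fun (i : 'I_N) (t : 'I_3) => gam_prob p t *
   ((if i == k then gam_val R t else 1) * (if i == l then gam_val R t else 1)).
transitivity (\sum_(g : {ffun 'I_N -> 'I_3}) \prod_(i < N) F i (g i)).
  apply: eq_bigr => g _; rewrite /F big_split /= big_split /=.
  by rewrite -!big_mkcond !big_pred1_eq.
rewrite -(bigA_distr_bigA F) /=.
case: eqP => [kl|/eqP kl].
  rewrite (bigD1 k) //= [X in _ * X]big1 ?mulr1.
    rewrite /F -kl eqxx !big_ord_recl big_ord0 /gam_prob /gam_val /=; ring.
  move=> i /negbTE ik; rewrite /F -kl ik.
  under eq_bigr do rewrite !mulr1.
  exact: sumw.
rewrite (bigD1 k) //= /F eqxx (negbTE kl).
rewrite !big_ord_recl big_ord0 /gam_prob /gam_val /=.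
by rewrite !mulr1 mulrN1 mulr0 !addr0 addrN mul0r.
Qed.

Theorem theorem2 (R : realType) (d N : nat) (U : 'M[R]_(d, N)) (C p lam : R) :
  (forall k : 'I_N, (U^T *m U) k k = 1) ->
  0 < C ->
  0 < p -> p <= 2%:R^-1 ->
  largest_eigenvalue (U^T *m U) lam ->
  trans_rademacher (H_U U C) U p <= C * Num.sqrt (2%:R * p * lam).
Proof.
move=> Hd HC Hp Hp2 Hlam.
have [N0|Npos] := posnP N.
  subst N; rewrite /trans_rademacher invr0 mul0r.
  by apply: mulr_ge0; [exact: ltW | exact: sqrtr_ge0].
have Ks0 : (U^T *m U)^T = U^T *m U by rewrite trmx_mul trmxK.
have hb := @spec_bound R N _ lam Ks0 (fun a => @eig_gram_ge0 _ _ _ U a) Hlam.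
set K := U^T *m U in Hd Hlam hb *.
have Ksym : K^T = K by rewrite /K trmx_mul trmxK.
have Ks j k : K k j = K j k by rewrite -{1}Ksym mxE.
have trK : \tr K = N%:R.
  rewrite /mxtrace (eq_bigr (fun _ => 1)); last by move=> i _; exact: Hd.
  by rewrite sumr_const card_ord.
rewrite trK in hb.
have trKKe : \tr (K *m K) = \sum_j \sum_k K j k ^+ 2.
  rewrite /mxtrace; apply: eq_bigr => j _; rewrite mxE; apply: eq_bigr => k _.
  by rewrite expr2 Ks.
have NR : 0 < N%:R :> R by rewrite ltr0n.
have trge : N%:R <= \tr (K *m K).
  rewrite trKKe -trK /mxtrace; apply: ler_sum => j _.
  rewrite (bigD1 j) //= Hd expr1n lerDl.
  by apply: sumr_ge0 => k _; apply: sqr_ge0.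
have lampos : 0 < lam.
  have : 0 < lam * N%:R by apply: lt_le_trans NR (le_trans trge hb).
  by rewrite pmulr_lgt0.
set M := 2%:R * p * lam.
have Mpos : 0 < M by rewrite /M !mulr_gt0 // ltr0n.
set t := Num.sqrt M.
have tpos : 0 < t by rewrite /t sqrtr_gt0.
have tt : t ^+ 2 = M by rewrite /t sqr_sqrtr // ltW.
pose s j (g : {ffun 'I_N -> 'I_3}) := \sum_k K j k * gam_val R (g k).
pose w (g : {ffun 'I_N -> 'I_3}) := \prod_(i < N) gam_prob p (g i).
have h2p : 0 <= 1 - 2%:R * p.
  have : 2%:R * p <= 2%:R * 2%:R^-1 by rewrite ler_pM2l // ltr0n.
  by rewrite mulfV ?pnatr_eq0 // subr_ge0.
have wpos g : 0 <= w g.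
  by apply: prodr_ge0 => i _; rewrite /gam_prob; case: ifP => _ //; exact: ltW.
have Ej j : \sum_g w g * s j g ^+ 2 = 2%:R * p * \sum_k K j k ^+ 2.
  transitivity (\sum_(g : {ffun 'I_N -> 'I_3}) \sum_k \sum_l
      (K j k * K j l) * (w g * (gam_val R (g k) * gam_val R (g l)))).
    apply: eq_bigr => g _.
    rewrite /s expr2 mulr_suml mulr_sumr; apply: eq_bigr => k _.
    rewrite mulr_sumr mulr_sumr; apply: eq_bigr => l _; ring.
  rewrite exchange_big /= mulr_sumr; apply: eq_bigr => k _.
  rewrite exchange_big /= (bigD1 k) //= [X in _ + X]big1 ?addr0.
    by rewrite -mulr_sumr /w E2 eqxx; ring.
  by move=> l lk; rewrite -mulr_sumr /w E2 eq_sym (negbTE lk) mulr0.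
have EQ : \sum_g w g * \sum_j s j g ^+ 2 = 2%:R * p * \tr (K *m K).
  under eq_bigr do rewrite mulr_sumr.
  rewrite exchange_big /= trKKe mulr_sumr; apply: eq_bigr => j _; exact: Ej.
rewrite /trans_rademacher.
apply: (@le_trans _ _ (N%:R^-1 * \sum_g w g *
     (C * ((\sum_j s j g ^+ 2 + N%:R * M) / (2%:R * t))))).
  apply: ler_wpM2l; first by rewrite invr_ge0 ler0n.
  apply: ler_sum => g _.
  apply: ler_wpM2l; first exact: wpos.
  apply: le_trans (@sup_bound _ _ _ U C g (ltW HC)) _.
  apply: ler_wpM2l; first exact: ltW.
  have -> : N%:R * M = \sum_(j < N) M by rewrite sumr_const card_ord mulr_natl.
  rewrite -big_split /= mulr_suml; apply: ler_sum => j _.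
  have h2t : 0 < 2%:R * t by rewrite mulr_gt0 // ltr0n.
  rewrite ler_pdivlMr //; change (`|s j g| * (2%:R * t) <= s j g ^+ 2 + M).
  rewrite -tt -(@real_normK _ (s j g)) ?num_real //.
  have := sqr_ge0 (`|s j g| - t); nra.
apply: (@le_trans _ _ (N%:R^-1 * (C / (2%:R * t) *
     (\sum_g w g * \sum_j s j g ^+ 2 + N%:R * M * \sum_g w g)))).
  rewrite le_eqVlt; apply/orP; left; apply/eqP; congr (_ * _).
  rewrite (_ : N%:R * M * \sum_g w g = \sum_g N%:R * M * w g); last by rewrite mulr_sumr.
  rewrite -big_split [RHS]mulr_sumr.
  by apply: eq_bigr => g _ /=; ring.
rewrite EQ /w E0 mulr1.
have hX : 2%:R * p * \tr (K *m K) + N%:R * M <= 2%:R * N%:R * t ^+ 2.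
  rewrite tt /M.
  have : 2%:R * p * \tr (K *m K) <= 2%:R * p * (lam * N%:R).
    by rewrite ler_pM2l // mulr_gt0 // ltr0n.
  lra.
apply: (@le_trans _ _ (N%:R^-1 * (C / (2%:R * t) * (2%:R * N%:R * t ^+ 2)))).
  apply: ler_wpM2l; first by rewrite invr_ge0 ler0n.
  apply: ler_wpM2l => //.
  by rewrite divr_ge0 ?ltW // mulr_gt0 // ltr0n.
rewrite le_eqVlt; apply/orP; left; apply/eqP.
field; rewrite ?pnatr_eq0 -?lt0n ?Npos ?gt_eqF //.
Qed.
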